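(* Let $E$ be a separable metric space with distance $d$, $m$ a probability measure on $E$ with full support, and for each $N\ge1$ let $E_N\subset E$, let $m_N$ be a probability measure on $E_N$ with $m_N\to m$ weakly, and let $\pi_N:E\to E_N$ be a map with $d(x,\pi_N(x))=\inf_{y\in E_N}d(x,y)$ for all $x\in E$. Let $F_N:E_N\to\mathbb R$, $N\ge1$, satisfy $\sup_N\|F_N\|_\infty<\infty$ and $\omega(\delta):=\sup_{N\ge1}\sup\{|F_N(x)-F_N(y)|:x,y\in E_N,\,d(x,y)\le\delta\}\to0$ as $\delta\downarrow0$. Then there exist a bounded uniformly continuous $F:E\to\mathbb R$ and a subsequence $(N_j)_{j\ge1}$ such that: (1) for every compact $J\subset E$, $\sup_{x\in J\cap E_{N_j}}|F(x)-F_{N_j}(x)|\to0$ as $j\to\infty$; (2) $F_{N_j}(\pi_{N_j}x)\to F(x)$ for all $x\in E$. *)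

(* Defs.v *)
From HB Require Import structures.
From mathcomp Require Import all_boot all_order all_algebra.
From mathcomp Require Import all_classical all_reals all_analysis.
Import Order.TTheory GRing.Theory Num.Theory numFieldNormedType.Exports.
Local Open Scope classical_set_scope.
Local Open Scope ring_scope.

Section Metric.
Context {R : realType} {T : Type} (d : T -> T -> R).

Definition is_metric : Prop :=
  [/\ (forall x y, 0 <= d x y),
      (forall x y, d x y = 0 <-> x = y),
      (forall x y, d x y = d y x) &
      (forall x y z, d x z <= d x y + d y z)].

Definition mball (x : T) (e : R) : set T := [set y | d x y < e].

Definition mopen (A : set T) : Prop :=
  forall x, A x -> exists2 e, 0 < e & mball x e `<=` A.

Definition mcompact (J : set T) : Prop :=
  forall C : set (set T), (forall A, C A -> mopen A) ->
    J `<=` \bigcup_(A in C) A ->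
    exists2 D : set (set T), finite_set D & D `<=` C /\ J `<=` \bigcup_(A in D) A.

Definition mseparable : Prop :=
  exists D : set T, countable D /\
    forall x e, 0 < e -> exists2 y, D y & d x y < e.

Definition mcontinuous (f : T -> R) : Prop :=
  forall x e, 0 < e -> exists2 del, 0 < del &
    forall y, d x y < del -> `|f x - f y| < e.

Definition muniform_continuous (f : T -> R) : Prop :=
  forall e, 0 < e -> exists2 del, 0 < del &
    forall x y, d x y < del -> `|f x - f y| < e.

Definition fbounded (f : T -> R) : Prop := exists M : R, forall x, `|f x| <= M.

Definition omega (E : nat -> set T) (F : nat -> T -> R) (del : R) : R :=
  sup [set r | exists N x y,
         [/\ E N x, E N y, d x y <= del & r = `|F N x - F N y|]].

End Metric.

(* Main.v *)
Require Import Defs.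
From HB Require Import structures.
From mathcomp Require Import all_boot all_order all_algebra.
From mathcomp Require Import all_classical all_reals all_analysis.
From mathcomp Require Import lra ring measurable_realfun.
Import Order.TTheory GRing.Theory Num.Theory numFieldNormedType.Exports.
Local Open Scope classical_set_scope.
Local Open Scope ring_scope.

Lemma ev_of (P : nat -> Prop) : (exists N, forall n, (N <= n)%N -> P n) -> \forall n \near \oo, P n.
Proof. move=> [N HN]. by exists N. Qed.
Lemma of_ev (P : nat -> Prop) : (\forall n \near \oo, P n) -> (exists N, forall n, (N <= n)%N -> P n).
Proof. move=> [N _ HN]. by exists N. Qed.
Lemma ev_nbhs0 (R : realType) (P : R -> Prop) : (\forall x \near 0^'+, P x) -> exists2 e : R, 0 < e & P e.
Proof. move=> H. 
have := H. rewrite near_withinE. move/nbhs_ballP => [e /= e0 He].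
exists (e/2). by rewrite divr_gt0.
apply: He. rewrite /ball /= sub0r normrN. rewrite gtr0_norm ?divr_gt0 //. rewrite ltr_pdivrMr // ltr_pMr //. lra.
by rewrite divr_gt0.
Qed.

Lemma cauchy_seq_cvg (R : realType) (u : nat -> R) :
  (forall e, 0 < e -> exists K, forall j, (K <= j)%N -> `|u K - u j| < e) -> cvgn u.
Proof.
move=> H; apply/cauchy_cvgP; apply: cauchy_exP => e e0.
have [K HK] := H e e0. exists (u K). exists K => // j /= Kj.
Qed.

Lemma bw_step (R : realType) (v : nat -> R) (M : R) : (forall k, `|v k| <= M) ->
  exists f : nat -> nat, (forall i j, (i < j)%N -> (f i < f j)%N) /\ cvgn (v \o f).
Proof.
move=> Hv.
have : bounded_fun v.
  exists M; split; first exact: num_real.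
  move=> y My x _. apply: le_trans (Hv x) _. exact: ltW.
move=> /bolzano_weierstrass [f finc fcv]. exists f; split => //.
move=> i j; rewrite !ltnNge; apply: contra => h. by have := finc j i; rewrite leEnat => <-.
Qed.

Lemma incr_ge (f : nat -> nat) : (forall i j, (i < j)%N -> (f i < f j)%N) -> forall m, (m <= f m)%N.
Proof.
move=> Hf; elim=> [|m IH] //. apply: leq_ltn_trans IH _. exact: Hf.
Qed.

Lemma diag (R : realType) (u : nat -> nat -> R) (M : R) : (forall n k, `|u n k| <= M) ->
  exists psi : nat -> nat, (forall i j, (i < j)%N -> (psi i < psi j)%N) /\
    forall n, cvgn (fun j => u n (psi j)).
Proof.
move=> Hu.
have step : forall gn : (nat -> nat) * nat, exists f : nat -> nat,
    (forall i j, (i < j)%N -> (f i < f j)%N) /\ cvgn (fun k => u gn.2 (gn.1 (f k))).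
  move=> [g n] /=. exact: (@bw_step R (fun k => u n (g k)) M (fun k => Hu n (g k))).
have [sel Hsel] := choice step.
pose phi := fix phi k := match k with
  | 0 => sel (id, 0)%N
  | k'.+1 => (phi k') \o (sel (phi k', k'.+1)) end.
have P1 : forall k i j, (i < j)%N -> (phi k i < phi k j)%N.
  elim=> [|k IH] i j ij /=; first by apply: (Hsel (id, 0%N)).1.
  apply: IH. exact: (Hsel (phi k, k.+1)).1.
have P2 : forall k, cvgn (fun j => u k (phi k j)).
  case=> [|k]; first exact: (Hsel (id, 0%N)).2.
  exact: (Hsel (phi k, k.+1)).2.
have P3 : forall k j, (k <= j)%N -> exists rho : nat -> nat,
    (forall m, (m <= rho m)%N) /\ forall m, phi j m = phi k (rho m).
  move=> k; elim=> [|j IH] kj.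
    move: kj; rewrite leqn0 => /eqP ->. by exists id.
  move: kj; rewrite leq_eqVlt => /orP [/eqP <-|kj]; first by exists id.
  have [rho [rho1 rho2]] := IH kj.
  exists (rho \o sel (phi j, j.+1)); split.
    move=> m /=. apply: leq_trans (rho1 _).
    exact: incr_ge (Hsel (phi j, j.+1)).1 m.
  move=> m /=. exact: rho2.
exists (fun j => phi j j); split.
  apply: (@homo_ltn nat (fun j => phi j j) (fun a b => (a < b)%N)).
    by move=> y x z; apply: ltn_trans.
  move=> i /=. apply: P1. exact: incr_ge (Hsel (phi i, i.+1)).1 i.+1.
move=> n. apply/cvg_ex. exists (limn (fun j => u n (phi n j))).
apply/cvgrPdist_lt => e e0.
have := (P2 n). move/cvgrPdist_lt => /(_ e e0) [K _ HK].
exists (maxn n K) => // j /= Hj.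
have [rho [rho1 rho2]] := P3 n j (leq_trans (leq_maxl _ _) Hj).
rewrite rho2. apply: HK => /=. apply: leq_trans (rho1 j).
exact: leq_trans (leq_maxr _ _) Hj.
Qed.

Lemma fin_ev (I : eqType) (D : set I) (Q : I -> nat -> Prop) : finite_set D ->
  (forall A, D A -> exists N, forall j, (N <= j)%N -> Q A j) ->
  exists N, forall j, (N <= j)%N -> forall A, D A -> Q A j.
Proof.
move=> /finite_seqP [s ->]. elim: s => [|a s IH] H.
  by exists 0%N => j _ A.
have [N1 H1] : exists N, forall j, (N <= j)%N -> forall A, [set` s] A -> Q A j.
  apply: IH => A sA. apply: H => /=. by rewrite inE sA orbT.
have [N2 H2] := H a (mem_head _ _).
exists (maxn N1 N2) => j Hj A /=. rewrite inE => /orP [/eqP ->|sA].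
  apply: H2. exact: leq_trans (leq_maxr _ _) Hj.
apply: H1 => //. exact: leq_trans (leq_maxl _ _) Hj.
Qed.

Lemma max0_lip (R : realDomainType) (a b : R) : `|Num.max 0 a - Num.max 0 b| <= `|a - b|.
Proof.
have h1 := ler_norm (a - b).
have h2 : -(a-b) <= `|a-b| by rewrite -normrN ler_norm.
case: (leP 0 a) => ha; case: (leP 0 b) => hb; rewrite ?max_r ?max_l ?subr0 ?sub0r ?normrN //;
  try (by apply/ltW); rewrite ?subrr ?normr0 // ler_norml; apply/andP; split; lra.
Qed.

Arguments max0_lip {R}.

Lemma mball_open (R : realType) (T : Type) (d : T -> T -> R) (hd : is_metric d) x e :
  mopen d (mball d x e).
Proof.
case: hd => d0 deq dsym dtri.
move=> y; rewrite /mball /= => hy. exists (e - d x y); first by rewrite subr_gt0.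
move=> z; rewrite /mball /= => hz. have := dtri x y z. lra.

Qed.

Arguments mball_open {R T d}.

Lemma mopen_meas (R : realType) (dsp : measure_display) (T : measurableType dsp)
  (d : T -> T -> R) (hBorel : @measurable dsp T = <<s mopen d >>) (A : set T) :
  mopen d A -> measurable A.
Proof. move=> hA. rewrite hBorel. exact: sub_sigma_algebra. Qed.

Arguments mopen_meas {R dsp T d} hBorel {A}.

Lemma cont_meas (R : realType) (dsp : measure_display) (T : measurableType dsp)
  (d : T -> T -> R) (hBorel : @measurable dsp T = <<s mopen d >>) (f : T -> R) :
  mcontinuous d f -> measurable_fun setT f.
Proof.
move=> hf. apply: (measurability _ (measurable_realfun.RGenOInfty.measurableE R)).
move=> _ [_ [a ->] <-]. apply: (@mopen_meas _ _ _ d hBorel).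
move=> z [_ /=]. rewrite in_itv /= andbT => az.
have [del del0 Hdel] := hf z (f z - a) (ltac:(by rewrite subr_gt0)).
exists del => // y /= /Hdel hy. split => //. rewrite in_itv /= andbT.
move: hy; rewrite ltr_norml => /andP [h1 h2]. lra.
Qed.

Arguments cont_meas {R dsp T d} hBorel {f}.

Lemma pi_le (R : realType) (T : Type) (d : T -> T -> R) (hd : is_metric d)
  (E : nat -> set T) (pi : nat -> T -> T)
  (hpi : forall N x, d x (pi N x) = inf [set d x y | y in E N]) N x y :
  E N y -> d x (pi N x) <= d x y.
Proof.
case: hd => d0 deq dsym dtri. move=> Ey. rewrite hpi.
apply: ge_inf; last by exists y.
exists 0 => _ [z _ <-]. exact: d0.
Qed.

Arguments pi_le {R T d} hd {E pi} hpi {N x y}.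

Lemma dense_pi (R : realType) (dsp : measure_display) (T : measurableType dsp)
  (d : T -> T -> R) (hd : is_metric d)
  (hBorel : @measurable dsp T = <<s mopen d >>)
  (m : probability T R)
  (hsupp : forall A : set T, mopen d A -> A !=set0 -> (0 < m A)%E)
  (E : nat -> set T) (mN : nat -> probability T R)
  (hmN_on : forall N (A : set T), measurable A -> A `&` E N = set0 -> mN N A = 0%E)
  (hweak : forall f : T -> R, mcontinuous d f -> fbounded f ->
     (\int[mN N]_x (f x)%:E)%E @[N --> \oo] --> (\int[m]_x (f x)%:E)%E)
  (pi : nat -> T -> T)
  (hpi : forall N x, d x (pi N x) = inf [set d x y | y in E N]) :
  forall x e, 0 < e -> exists K, forall N, (K <= N)%N -> d x (pi N x) < e.
Proof.
move=> x e e0.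
have hd' := hd. case: hd' => d0 deq dsym dtri.
pose f z := Num.max 0 (1 - d x z / e).
have f0 : forall z, 0 <= f z by move=> z; rewrite le_max lexx.
have f1 : forall z, f z <= 1.
  move=> z; rewrite ge_max ler01 /=. rewrite lerBlDr lerDl. by rewrite divr_ge0 // ltW.
have fc : mcontinuous d f.
  move=> z eps eps0. exists (eps * e); first exact: mulr_gt0.
  move=> y hy. rewrite /f. have hh := max0_lip (1 - d x z / e) (1 - d x y / e). apply: le_lt_trans hh _.
  have -> : (1 - d x z / e) - (1 - d x y / e) = (d x y - d x z) * e^-1 by ring.
  rewrite normrM [`|e^-1|]gtr0_norm ?invr_gt0 // ltr_pdivrMr //.
  apply: le_lt_trans hy. rewrite ler_norml. have := dtri x z y. have := dtri x y z.
  rewrite (dsym y z). move=> h1 h2. apply/andP; split; lra.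
have fb : fbounded f.
  exists 1 => z. by rewrite ger0_norm.
have mf : measurable_fun setT f := cont_meas hBorel fc.
have mfE : measurable_fun setT (fun z => (f z)%:E) by apply/measurable_EFinP.
pose B := mball d x e. pose B2 := mball d x (e / 2).
have mB : measurable B := mopen_meas hBorel (mball_open hd x e).
have mB2 : measurable B2 := mopen_meas hBorel (mball_open hd x (e/2)).
have hxx : d x x = 0 by apply/deq.
have hpos : (0 < \int[m]_z (f z)%:E)%E.
  have mB2pos : (0 < m B2)%E.
    apply: hsupp; first exact: mball_open.
    exists x; rewrite /B2 /mball /= hxx. by rewrite divr_gt0.
  apply: (@lt_le_trans _ _ ((1/2)%:E * m B2)%E).
    by rewrite mule_gt0 // lte_fin divr_gt0.
  rewrite -(setIT B2) -integral_indic // -ge0_integralZl //.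
  2: by apply/measurable_EFinP; exact: measurable_indic.
  apply: ge0_le_integral => //.
    under eq_fun do rewrite -EFinM.
    apply/measurable_EFinP; apply: measurable_funM => //; exact: measurable_indic.
  move=> z _; rewrite -EFinM lee_fin indicE; case: (boolP (z \in B2)) => hz /=; last first.
    by rewrite mulr0.
  rewrite mulr1 /f le_max; apply/orP; right.
  move: hz; rewrite inE /B2 /mball /= => hz.
  have : d x z / e <= 1/2 by rewrite ler_pdivrMr //; lra.
  lra.
have hzero : forall N, B `&` E N = set0 -> (\int[mN N]_z (f z)%:E <= 0)%E.
  move=> N hBE. rewrite -(hmN_on N B mB hBE) -[X in (_ <= mN N X)%E](setIT B) -integral_indic //.
  apply: ge0_le_integral => //.
  - by move=> z _; rewrite lee_fin.
  - by apply/measurable_EFinP; exact: measurable_indic.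
  move=> z _; rewrite lee_fin indicE; case: (boolP (z \in B)) => hz /=; first exact: f1.
  move: hz; rewrite notin_setE /B /mball /= => /negP; rewrite -leNgt => hz.
  rewrite /f ge_max lexx /= subr_le0.
  by rewrite ler_pdivlMr // mul1r.
have hev := hweak f fc fb.
have := hev _ (open_ereal_gt' hpos).
move=> [K _ HK]; exists K => N /HK /= hN.
case: (pselect (B `&` E N = set0)) => [h|h].
  by have := hzero N h; rewrite leNgt hN.
have [y [By Ey]] : (B `&` E N) !=set0 by apply/set0P/eqP.
apply: le_lt_trans (pi_le hd hpi Ey) _. exact: By.
Qed.

Theorem theorem2p7 (R : realType) (dsp : measure_display) (T : measurableType dsp)
  (d : T -> T -> R) (hd : is_metric d)
  (hBorel : @measurable dsp T = <<s mopen d >>)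
  (hsep : mseparable d)
  (m : probability T R)
  (hsupp : forall A : set T, mopen d A -> A !=set0 -> (0 < m A)%E)
  (E : nat -> set T) (mN : nat -> probability T R)
  (hmN_on : forall N (A : set T), measurable A -> A `&` E N = set0 -> mN N A = 0%E)
  (hweak : forall f : T -> R, mcontinuous d f -> fbounded f ->
     (\int[mN N]_x (f x)%:E)%E @[N --> \oo] --> (\int[m]_x (f x)%:E)%E)
  (pi : nat -> T -> T)
  (hpiE : forall N x, E N (pi N x))
  (hpi : forall N x, d x (pi N x) = inf [set d x y | y in E N])
  (F : nat -> T -> R)
  (hFb : exists M : R, forall N x, E N x -> `|F N x| <= M)
  (homega : omega d E F del @[del --> 0^'+] --> 0) :
  exists (F0 : T -> R) (Nj : nat -> nat),
    [/\ fbounded F0, muniform_continuous d F0,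
        {homo Nj : i j / (i < j)%N},
        (forall J : set T, mcompact d J ->
           sup [set `|F0 x - F (Nj j) x| | x in J `&` E (Nj j)] @[j --> \oo] --> 0) &
        (forall x : T, F (Nj j) (pi (Nj j) x) @[j --> \oo] --> F0 x)].
Proof.
have hd' := hd; case: hd' => d0 deq dsym dtri.
have hdense := dense_pi R dsp T d hd hBorel m hsupp E mN hmN_on hweak pi hpi.
have [M HM] := hFb.
have hxx : forall x, d x x = 0 by move=> x; apply/deq.
have pi_id : forall N x, E N x -> pi N x = x.
  move=> N x Ex. apply/esym/deq/eqP. rewrite eq_le d0 andbT.
  by rewrite -(hxx x) (pi_le hd hpi Ex).
have pi_dist : forall N x y, d (pi N x) (pi N y) <= 2 * d x y + 2 * d y (pi N y).
  move=> N x y. have h1 := dtri (pi N x) x (pi N y).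
  have h2 : d x (pi N x) <= d x (pi N y) := pi_le hd hpi (hpiE N y).
  have h3 := dtri x y (pi N y). rewrite (dsym (pi N x) x) in h1. lra.
have equi : forall eps, 0 < eps -> exists2 del, 0 < del &
    forall N x y, E N x -> E N y -> d x y <= del -> `|F N x - F N y| <= eps.
  move=> eps eps0.
  have := homega. move/cvgrPdist_lt => /(_ eps eps0) /ev_nbhs0 [del del0 Hdel].
  exists del => // N x y Ex Ey dxy.
  have hub : has_ubound [set r | exists N x y,
         [/\ E N x, E N y, d x y <= del & r = `|F N x - F N y|]].
    exists (M + M) => _ [N' [x' [y' [Ex' Ey' _ ->]]]].
    apply: le_trans (ler_normB _ _) _. by apply: lerD; apply: HM.
  have h := ub_le_sup hub (ex_intro _ N (ex_intro _ x (ex_intro _ y (And4 Ex Ey dxy erefl)))).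
  apply: le_trans h _. rewrite sub0r normrN in Hdel.
  exact: ltW (le_lt_trans (ler_norm _) Hdel).
have equiG : forall eps, 0 < eps -> exists2 del, 0 < del &
    forall N x y, 2 * d x y + 2 * d y (pi N y) <= del ->
      `|F N (pi N x) - F N (pi N y)| <= eps.
  move=> eps eps0. have [del del0 Hdel] := equi eps eps0.
  exists del => // N x y h. apply: Hdel; try exact: hpiE.
  exact: le_trans (pi_dist N x y) h.
case: (pselect (exists t : T, True)) => [[t0 _]|noT]; last first.
  exists (fun _ => 0), id; split.
  - by exists 0 => x; exfalso; apply: noT; exists x.
  - by move=> eps eps0; exists 1 => // x; exfalso; apply: noT; exists x.
  - by [].
  - move=> J _. apply/cvgrPdist_lt => eps eps0. apply: ev_of. exists 0%N => j _.
    rewrite (_ : [set _ | x in _] = set0) ?sup0 ?subr0 ?normr0 //.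
    by apply/seteqP; split => // r [x _ _]; exfalso; apply: noT; exists x.
  - by move=> x; exfalso; apply: noT; exists x.
have [en Hen] : exists en : nat -> T, forall x eps, 0 < eps -> exists n, d x (en n) < eps.
  case: hsep => D [cD dD]. move/countable_injP: cD => [g ginj].
  have : forall n, exists y, (exists z, D z /\ g z = n) -> D y /\ g y = n.
    move=> n; case: (pselect (exists z, D z /\ g z = n)) => [[z hz]|h].
      by exists z.
    by exists t0.
  move/choice => [en Hen']. exists en => x eps eps0.
  have [y Dy dy] := dD x eps eps0. exists (g y).
  have [Dey gey] := Hen' (g y) (ex_intro _ y (conj Dy erefl)).
  have -> : en (g y) = y by apply: ginj => //; exact: mem_set.
  exact: dy.
have [psi [psi_inc psi_cv]] := @diag R (fun n k => F k (pi k (en n))) M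
  (fun n k => HM k _ (hpiE k _)).
have psi_ge := incr_ge _ psi_inc.
have denseP : forall y eps, 0 < eps -> exists K, forall j, (K <= j)%N ->
    d y (pi (psi j) y) < eps.
  move=> y eps eps0. have [K HK] := hdense y eps eps0.
  exists K => j Kj. apply: HK. exact: leq_trans Kj (psi_ge j).
have acv : forall x, cvgn (fun j => F (psi j) (pi (psi j) x)).
  move=> x; apply: cauchy_seq_cvg => eps eps0.
  have [del del0 Hdel] := equiG (eps/3) (ltac:(by rewrite divr_gt0)).
  have [n hn] := Hen x (del/4) (ltac:(by rewrite divr_gt0)).
  have [K1 HK1] := denseP (en n) (del/4) (ltac:(by rewrite divr_gt0)).
  have := psi_cv n; move/cvgrPdist_lt => /(_ (eps/6) (ltac:(by rewrite divr_gt0))).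
  move=> /of_ev [K0 HK0].
  exists (maxn K0 K1) => j Hj.
  have hK0 : (K0 <= maxn K0 K1)%N by rewrite leq_maxl.
  have hK1 : (K1 <= maxn K0 K1)%N by rewrite leq_maxr.
  have b1 := Hdel (psi (maxn K0 K1)) x (en n)
    (ltac:(have := HK1 _ hK1; lra)).
  have b2 := Hdel (psi j) x (en n)
    (ltac:(have := HK1 _ (leq_trans hK1 Hj); lra)).
  have b3 := HK0 _ hK0.
  have b4 := HK0 _ (leq_trans hK0 Hj).
  move: b1 b2 b3 b4; rewrite !ler_norml !ltr_norml => /andP[b1 b1'] /andP[b2 b2'] /andP[b3 b3'] /andP[b4 b4'].
  apply/andP; split; lra.
pose F0 := fun x => limn (fun j => F (psi j) (pi (psi j) x)).
have hconv : forall x, F (psi j) (pi (psi j) x) @[j --> \oo] --> F0 x.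
  move=> x. exact: acv x.
have hconvK : forall x eps, 0 < eps -> exists K, forall j, (K <= j)%N ->
    `|F0 x - F (psi j) (pi (psi j) x)| < eps.
  move=> x eps eps0. have := hconv x; move/cvgrPdist_lt => /(_ eps eps0).
  exact: of_ev.
have Funif : muniform_continuous d F0.
  move=> eps eps0.
  have [del del0 Hdel] := equiG (eps/2) (ltac:(by rewrite divr_gt0)).
  exists (del/4); first by rewrite divr_gt0.
  move=> x y dxy.
  have [K1 HK1] := denseP y (del/4) (ltac:(by rewrite divr_gt0)).
  have [K2 HK2] := hconvK x (eps/4) (ltac:(by rewrite divr_gt0)).
  have [K3 HK3] := hconvK y (eps/4) (ltac:(by rewrite divr_gt0)).
  pose j := maxn K1 (maxn K2 K3).
  have hj : [/\ (K1 <= j)%N, (K2 <= j)%N & (K3 <= j)%N].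
    by split; rewrite /j ?leq_maxl // leq_max ?leq_maxl ?leq_maxr ?orbT.
  case: hj => h1 h2 h3.
  have b1 := Hdel (psi j) x y (ltac:(have := HK1 _ h1; lra)).
  have b2 := HK2 _ h2. have b3 := HK3 _ h3.
  move: b1 b2 b3; rewrite !ler_norml !ltr_norml => /andP[b1 b1'] /andP[b2 b2'] /andP[b3 b3'].
  apply/andP; split; lra.
exists F0, psi; split => //.
- exists (M + 1) => x.
  have [K HK] := hconvK x 1 ltr01.
  have b1 := HK K (leqnn K). have b2 := HM (psi K) _ (hpiE (psi K) x).
  move: b1 b2; rewrite !ler_norml !ltr_norml => /andP[b1 b1'] /andP[b2 b2'].
  apply/andP; split; lra.
- move=> J cJ. apply/cvgrPdist_lt => eps eps0. apply: ev_of.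
  have [del del0 Hdel] := equiG (eps/8) (ltac:(by rewrite divr_gt0)).
  have [del2 del20 Hdel2] := Funif (eps/4) (ltac:(by rewrite divr_gt0)).
  pose r := Num.min (del/4) del2.
  have r0 : 0 < r by rewrite /r lt_min del20 divr_gt0.
  have rdel : r <= del/4 by rewrite /r ge_min lexx.
  have rdel2 : r <= del2 by rewrite /r ge_min lexx orbT.
  pose C := [set mball d z r | z in J].
  have [D' finD [DC JD]] := cJ C
    (ltac:(by move=> A [z _ <-]; exact: mball_open hd z r))
    (ltac:(move=> x Jx; exists (mball d x r); [by exists x|];
             by rewrite /mball /= hxx)).
  have [N0 HN0] := @fin_ev _ D'
    (fun A j => forall x, A x -> `|F0 x - F (psi j) (pi (psi j) x)| <= eps/2) finD
    (ltac:(
      move=> A /DC [z Jz <-];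
      have [K1 HK1] := denseP z (del/4) (ltac:(by rewrite divr_gt0));
      have [K2 HK2] := hconvK z (eps/8) (ltac:(by rewrite divr_gt0));
      exists (maxn K1 K2) => j Hj x; rewrite /mball /= => dzx;
      have h1 := Hdel2 z x (lt_le_trans dzx rdel2);
      have h2 := HK2 j (leq_trans (leq_maxr _ _) Hj);
      have h3 := Hdel (psi j) x z
        (ltac:(have := HK1 j (leq_trans (leq_maxl _ _) Hj); rewrite (dsym x z); lra));
      move: h1 h2 h3; rewrite !ler_norml !ltr_norml => /andP[b1 b1'] /andP[b2 b2'] /andP[b3 b3'];
      apply/andP; split; lra)).
  exists N0 => j Hj.
  set S := [set _ | x in _].
  have Sb : forall s, S s -> 0 <= s <= eps/2.
    move=> _ [x [Jx Ex] <-]. rewrite normr_ge0 /=.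
    have [A DA Ax] := JD x Jx. have := HN0 j Hj A DA x Ax.
    by rewrite pi_id.
  rewrite sub0r normrN.
  case: (pselect (S = set0)) => [->|hS]; first by rewrite sup0 normr0.
  have [s Ss] : S !=set0 by apply/set0P/eqP.
  have hub : has_ubound S by exists (eps/2) => t /Sb /andP[].
  have hs1 : sup S <= eps/2 by apply: ge_sup; [exists s | move=> t /Sb /andP[]].
  have hs2 : s <= sup S := ub_le_sup hub Ss.
  have := Sb s Ss => /andP[hs3 hs4].
  rewrite ger0_norm; lra.
Qed.
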